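(* Let $X=(x_1,\ldots,x_L,x_1,\ldots,x_L,\ldots)$ be a periodic sequence of positive reals with period $L$. Assume that for every $c\in[0,1]$ the limit $F_X(c):=\lim_{k\to\infty}F_X(k,c)$ exists and that $c\mapsto F_X(c)$ is continuous on $[0,1]$. Then for every $c\in(0,1]$ the limit $\lim_{n\to\infty}S(X,n,\lceil cn\rceil)^{1/\lceil cn\rceil}$ exists and equals $F_X(c)$.
   Context: For a sequence $X$ of positive reals and integers $1\le k\le n$, $S(X,n,k):=\binom{n}{k}^{-1}\sum_{1\le i_1<\cdots<i_k\le n}x_{i_1}\cdots x_{i_k}$. For $k\ge1$ and $c\in(0,1]$ set $F_X(k,c):=S(X,kL,\lceil ckL\rceil)^{1/\lceil ckL\rceil}$, and set $F_X(k,0):=(x_1+\cdots+x_L)/L$. *)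

(* Defs.v *)
From HB Require Import structures.
From mathcomp Require Import all_boot all_order all_algebra.
From mathcomp Require Import all_classical all_reals all_analysis.
Set Implicit Arguments. Unset Strict Implicit. Unset Printing Implicit Defensive.
Import Order.TTheory GRing.Theory Num.Theory.
Local Open Scope ring_scope.

(* ceiling of a real, as a natural number (used only at nonnegative arguments) *)
Definition ceiln {R : realType} (r : R) : nat := `|Num.ceil r|%N.

(* S(X,n,k) = binom(n,k)^{-1} * sum over k-subsets {i_1<...<i_k} of {1..n}
   of x_{i_1}...x_{i_k}.  Sequence X is 0-indexed: x_1 = X 0. *)
Definition S {R : realType} (X : nat -> R) (n k : nat) : R :=
  ('C(n, k)%:R)^-1 *
  \sum_(A : {set 'I_n} | #|A| == k) \prod_(i in A) X (nat_of_ord i).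

Definition FX {R : realType} (X : nat -> R) (L k : nat) (c : R) : R :=
  if c == 0 then (\sum_(i < L) X i) / L%:R
  else let m := ceiln (c * (k * L)%:R) in
       powR (S X (k * L) m) (m%:R)^-1.

(* Main.v *)
Require Import Defs.
From HB Require Import structures.
From mathcomp Require Import all_boot all_order all_algebra.
From mathcomp Require Import all_classical all_reals all_analysis.
From mathcomp Require Import ring lra zify.
Import Order.TTheory GRing.Theory Num.Theory.
Import numFieldNormedType.Exports.
Local Open Scope ring_scope.

Lemma ceiln_bnd (R : realType) (x : R) : 0 <= x ->
  x <= (ceiln x)%:R < x + 1.
Proof.
move=> hx; rewrite /ceiln natr_absz ger0_norm; last by rewrite ceil_ge0 (lt_le_trans _ hx) // ltrN10.
have := ceilB1_lt x; rewrite intrD /= intrN.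
by rewrite ceil_ge /= => h; rewrite -ltrBlDr.
Qed.

Lemma absb (R : realType) (x : R) : - `|x| <= x <= `|x|.
Proof. by rewrite -ler_norml. Qed.

Lemma path_bnd (R : realType) (f : nat -> R) K t :
  (forall u, (u < t)%N -> `|f u.+1 - f u| <= K) -> `|f t - f 0%N| <= t%:R * K.
Proof.
elim: t => [|t IH] h; first by rewrite subrr normr0 mul0r.
have -> : f t.+1 - f 0%N = (f t.+1 - f t) + (f t - f 0%N) by ring.
apply: (le_trans (ler_normD _ _)).
rewrite -natr1 mulrDl mul1r addrC; apply: lerD; last exact: h.
by apply: IH => u hu; apply: h; rewrite ltnS ltnW.
Qed.

Section Comb.
Variables (R : realType) (X : nat -> R).

Definition Pp n : {poly R} := \prod_(i < n) ((X i)%:P * 'X + 1).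
Definition ee n k := (Pp n)`_k.

Lemma ee0 k : ee 0 k = (k == 0)%:R.
Proof. by rewrite /ee /Pp big_ord0 coef1. Qed.

Lemma eeS n k : ee n.+1 k = ee n k + (if k is k'.+1 then X n * ee n k' else 0).
Proof.
rewrite /ee /Pp big_ord_recr /= mulrDr mulr1 coefD mulrA coefMX coefMC.
case: k => [|k] /=; first by rewrite add0r addr0.
by rewrite addrC mulrC.
Qed.

Lemma sum_ee n k :
  \sum_(A : {set 'I_n} | #|A| == k) \prod_(i in A) X i = ee n k.
Proof.
rewrite /ee /Pp bigA_distr coef_sum big_mkcond /=.
apply: eq_bigr => A _.
rewrite -big_mkcond /= big_split /= -rmorph_prod prodr_const coefCM coefXn.
by case: eqP => [->|]; rewrite ?eqxx ?mulr1 // => /eqP; rewrite eq_sym => /negPf ->; rewrite mulr0.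
Qed.

Variables (m M : R).
Hypothesis hm : 0 < m.
Hypothesis hXm : forall i, m <= X i.
Hypothesis hXM : forall i, X i <= M.

Lemma X_gt0 i : 0 < X i. Proof. exact: lt_le_trans (hXm i). Qed.

Lemma ee_n0 n : ee n 0 = 1.
Proof. by elim: n => [|n IH]; rewrite ?ee0 // eeS addr0. Qed.

Lemma ee_ge0 n k : 0 <= ee n k.
Proof.
elim: n k => [|n IH] k; first by rewrite ee0; case: (k == 0).
rewrite eeS; case: k => [|k]; rewrite ?addr0 //.
by rewrite addr_ge0 // mulr_ge0 // ltW // X_gt0.
Qed.

Lemma ee_bnd n k :
  'C(n, k)%:R * m ^+ k <= ee n k <= 'C(n, k)%:R * M ^+ k.
Proof.
elim: n k => [|n IH] k.
  by rewrite ee0; case: k => [|k] /=; rewrite ?bin0 ?expr0 ?mulr1 ?mul0r ?lexx.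
case: k => [|k]; first by rewrite ee_n0 bin0 expr0 mulr1 lexx.
rewrite eeS binS natrD !mulrDl.
have /andP[a1 a2] := IH k.+1; have /andP[b1 b2] := IH k.
have hx1 := hXm n; have hx2 := hXM n.
have c0 : 0 <= 'C(n, k)%:R * m ^+ k by rewrite mulr_ge0 // exprn_ge0 // ltW.
apply/andP; split; apply: lerD => //; rewrite exprS mulrCA.
  by apply: ler_pM => //; rewrite ltW.
apply: ler_pM => //; first exact: ltW (X_gt0 n).
exact: ee_ge0.
Qed.

Lemma E1 n k : (n%:R - k%:R) * m * ee n k <= k.+1%:R * ee n k.+1.
Proof.
elim: n k => [|n IH] k.
  rewrite (ee0 k.+1) /= mulr0 sub0r.
  by rewrite !mulNr oppr_le0 !mulr_ge0 ?ee_ge0 // ltW.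
case: k => [|k].
  rewrite !eeS !ee_n0 addr0 mulr1 subr0 mul1r mulr1.
  have := IH 0; rewrite ee_n0 subr0 mulr1 mul1r.
  have := hXm n; rewrite -natr1; lra.
rewrite !eeS.
have i1 := IH k.+1; have i0 := IH k.
set a0 := ee n k in i0 *; set a1 := ee n k.+1 in i0 i1 *; set a2 := ee n k.+2 in i1 *.
have x0 := X_gt0 n; have xm := hXm n.
have h1 : 0 <= (X n - m) * a1 by rewrite mulr_ge0 ?ee_ge0 // subr_ge0.
have h2 := ler_wpM2l (ltW x0) i0.
rewrite -!natr1 in i0 i1 h2 *. 
nra.
Qed.

Lemma E2 n k : k.+1%:R * ee n k.+1 <= n%:R * M * ee n k.
Proof.
elim: n k => [|n IH] k.
  by rewrite (ee0 k.+1) /= mulr0 mul0r mul0r.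
case: k => [|k].
  rewrite !eeS !ee_n0 addr0 mulr1 mul1r mulr1.
  have := IH 0; rewrite ee_n0 mulr1 mul1r.
  have := hXM n; rewrite -natr1; lra.
rewrite !eeS.
have i1 := IH k.+1; have i0 := IH k.
set a0 := ee n k in i0 *; set a1 := ee n k.+1 in i0 i1 *; set a2 := ee n k.+2 in i1 *.
have x0 := X_gt0 n; have xm := hXM n.
have h1 : 0 <= (M - X n) * a1 by rewrite mulr_ge0 ?ee_ge0 // subr_ge0.
have h2 := ler_wpM2l (ltW x0) i0.
have h3 : 0 <= M * X n * a0 by rewrite !mulr_ge0 ?ee_ge0 // ltW // (lt_le_trans x0).
rewrite -!natr1 in i0 i1 h2 *.
nra.
Qed.

Lemma le_div_cross (a b c d : R) : 0 < b -> 0 < d -> a * d <= c * b -> a / b <= c / d.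
Proof. by move=> hb hd h; rewrite ler_pdivrMr // mulrAC ler_pdivlMr. Qed.

Lemma ln_ratio (a b lo hi : R) : 0 < a -> 0 < b -> 0 < lo ->
  lo * b <= a -> a <= hi * b -> ln lo <= ln a - ln b <= ln hi.
Proof.
move=> ha hb hl h1 h2.
have hh : 0 < hi by rewrite -(pmulr_lgt0 _ hb) (lt_le_trans ha).
rewrite -ln_div ?posrE //; apply/andP; split; rewrite ler_ln ?posrE ?divr_gt0 //.
  by rewrite ler_pdivlMr.
by rewrite ler_pdivrMr.
Qed.

Definition ss n k := ee n k / 'C(n, k)%:R.
Definition ll n k := ln (ss n k).

Lemma ee_gt0 n k : (k <= n)%N -> 0 < ee n k.
Proof.
move=> kn; have /andP[h _] := ee_bnd n k; apply: lt_le_trans h.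
by rewrite mulr_gt0 ?exprn_gt0 // ltr0n bin_gt0.
Qed.

Lemma ss_gt0 n k : (k <= n)%N -> 0 < ss n k.
Proof. by move=> kn; rewrite divr_gt0 ?ee_gt0 // ltr0n bin_gt0. Qed.

Lemma stepA n i : (i <= n)%N ->
  ln (m * i.+1%:R / n.+1%:R) <= ll n.+1 i.+1 - ll n i <= ln (2 * M).
Proof.
move=> hin.
have c0 : 0 < 'C(n, i)%:R :> R by rewrite ltr0n bin_gt0.
have c1 : 0 < 'C(n.+1, i.+1)%:R :> R by rewrite ltr0n bin_gt0.
have rel : i.+1%:R * 'C(n.+1, i.+1)%:R = n.+1%:R * 'C(n, i)%:R :> R.
  by rewrite -!natrM -mul_bin_diag.
have e0 := ee_gt0 n i hin.
have e2 := E2 n i.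
have eq1 := eeS n i.+1.
have xm := hXm n; have xM := hXM n; have x0 := X_gt0 n.
apply: ln_ratio; rewrite ?ss_gt0 //.
- by rewrite !mulr_gt0 ?invr_gt0 ?ltr0n.
- rewrite /ss mulf_div; apply: le_div_cross; [by rewrite mulr_gt0 // ltr0n | by [] | ]. rewrite -rel eq1.
  have h : m * ee n i <= ee n i.+1 + X n * ee n i.
    have := ee_ge0 n i.+1; have := ler_wpM2r (ltW e0) xm; lra.
  have hP : 0 <= i.+1%:R * 'C(n.+1, i.+1)%:R :> R by rewrite mulr_ge0 // ltW.
  have := ler_wpM2r hP h; lra.
- rewrite /ss mulrA; apply: le_div_cross => //.
  rewrite eq1.
  set a0 := ee n i in e0 e2 *; set a1 := ee n i.+1 in e2 *.
  have hi : (i.+1%:R : R) <= n.+1%:R by rewrite ler_nat.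
  have h4 := ler_wpM2l (ltW e0) xM.
  have h5 : 0 <= M * a0 by rewrite mulr_ge0 // ltW // (lt_le_trans x0).
  have h6 := ler_wpM2r h5 hi.
  have h7 : (n%:R : R) <= n.+1%:R by rewrite ler_nat.
  have h8 := ler_wpM2r h5 h7.
  have h9 := ler_wpM2l (ler0n _ i.+1) h4.
  have k1 : i.+1%:R * a1 + i.+1%:R * X n * a0 <= 2 * n.+1%:R * M * a0.
    lra.
  have k2 := ler_wpM2r (ltW c1) k1.
  rewrite -(ler_pM2l (ltr0n _ n.+1 : (0 : R) < _)).
  have -> : n.+1%:R * ((a1 + X n * a0) * 'C(n, i)%:R)
      = (i.+1%:R * a1 + i.+1%:R * X n * a0) * 'C(n.+1, i.+1)%:R.
    transitivity ((a1 + X n * a0) * (n.+1%:R * 'C(n, i)%:R)); first by ring.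
    by rewrite -rel; ring.
  lra.
Qed.

Lemma keyB n i : (i <= n)%N ->
  m * ((n.+1%:R - i%:R) * ee n.+1 i) <= (m + M) * (n.+1%:R * ee n i).
Proof.
have xm := hXm n; have xM := hXM n; have x0 := X_gt0 n.
rewrite eeS; case: i => [|i'] hin.
  rewrite addr0 subr0; apply: ler_wpM2r; last by rewrite lerDl ltW // (lt_le_trans x0).
  by rewrite mulr_ge0 ?ee_ge0.
have E := E1 n i'.
have e0 := ee_gt0 n i'.+1 hin.
set a := ee n i' in E *; set a0 := ee n i'.+1 in E e0 *.
have ha : 0 <= a by apply: ee_ge0.
have hxa := ler_wpM2l (ltW x0) E.
have hMa : X n * (i'.+1%:R * a0) <= M * (i'.+1%:R * a0).
  by rewrite ler_wpM2r // mulr_ge0 // ltW.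
have hi2 : (i'.+1%:R : R) <= n.+1%:R by rewrite ler_nat ltnS (leq_trans _ hin).
have hMa2 := ler_wpM2l (ltW (lt_le_trans x0 xM)) (ler_wpM2r (ltW e0) hi2).
have hmb : m * a0 * (n%:R - i'%:R) <= m * a0 * n.+1%:R.
  apply: ler_wpM2l; first by rewrite mulr_ge0 // ltW.
  by rewrite -natr1; have : (0:R) <= i'%:R by []; lra.
rewrite -!natr1 in E hxa hMa hi2 hMa2 hmb *.
lra.
Qed.

Lemma stepB n i : (i <= n)%N ->
  ln ((n.+1%:R - i%:R) / n.+1%:R) <= ll n.+1 i - ll n i <= ln ((m + M) / m).
Proof.
move=> hin.
have c0 : 0 < 'C(n, i)%:R :> R by rewrite ltr0n bin_gt0.
have c1 : 0 < 'C(n.+1, i)%:R :> R by rewrite ltr0n bin_gt0 (leq_trans hin).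
have hin1 : (i <= n.+1)%N by rewrite (leq_trans hin).
have rel : (n.+1%:R - i%:R) * 'C(n.+1, i)%:R = n.+1%:R * 'C(n, i)%:R :> R.
  by rewrite -natrB // -!natrM -mul_bin_down.
have hi : (i%:R : R) <= n%:R by rewrite ler_nat.
have e0 := ee_gt0 n i hin.
have xm := hXm n; have xM := hXM n; have x0 := X_gt0 n.
have eq1 := eeS n i.
have ge : ee n i <= ee n.+1 i.
  rewrite eq1; case: (i) => [|i']; rewrite ?addr0 //.
  by rewrite lerDl mulr_ge0 ?ee_ge0 // ltW.
apply: ln_ratio; rewrite ?ss_gt0 //.
- by rewrite divr_gt0 ?ltr0n // subr_gt0 ltr_nat ltnS.
- rewrite /ss mulf_div; apply: le_div_cross; [by rewrite mulr_gt0 // ltr0n | by [] | ].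
  rewrite -rel.
  have hP : 0 <= (n.+1%:R - i%:R) * 'C(n.+1, i)%:R :> R.
    by rewrite mulr_ge0 // ?subr_ge0 ?ler_nat // ltW.
  have := ler_wpM2r hP ge; lra.
- rewrite /ss mulrA; apply: le_div_cross => //.
  have key := keyB n i hin.
  rewrite -(ler_pM2l (mulr_gt0 hm (ltr0n _ n.+1 : (0 : R) < _))).
  have -> : m * n.+1%:R * (ee n.+1 i * 'C(n, i)%:R)
      = m * ((n.+1%:R - i%:R) * ee n.+1 i) * 'C(n.+1, i)%:R.
    transitivity (m * ee n.+1 i * (n.+1%:R * 'C(n, i)%:R)); first by ring.
    by rewrite -rel; ring.
  have -> : m * n.+1%:R * ((m + M) / m * ee n i * 'C(n.+1, i)%:R)
      = (m + M) * (n.+1%:R * ee n i) * 'C(n.+1, i)%:R.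
    by field; rewrite gt_eqF.
  by rewrite ler_wpM2r // ltW.
Qed.

Lemma ll_bnd n i : (i <= n)%N -> i%:R * ln m <= ll n i <= i%:R * ln M.
Proof.
move=> hin; have /andP[h1 h2] := ee_bnd n i.
have c0 : 0 < 'C(n, i)%:R :> R by rewrite ltr0n bin_gt0.
have hM : 0 < M by apply: lt_le_trans (X_gt0 0) (hXM 0).
rewrite !mulr_natl -!lnXn // /ll.
apply/andP; split; rewrite ler_ln ?posrE ?exprn_gt0 ?ss_gt0 // /ss.
  by rewrite ler_pdivlMr // mulrC.
by rewrite ler_pdivrMr // mulrC.
Qed.

Definition KA c := `|ln (m * c / 2)| + `|ln (2 * M)|.
Definition KB c := `|ln ((1 - c) / 2)| + `|ln ((m + M) / m)|.
Definition Lam := `|ln m| + `|ln M|.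
Definition KK (L : nat) c := L%:R * (KA c + KB c) + L%:R * Lam.

Lemma KK_ge0 L c : 0 <= KK L c.
Proof.
by rewrite /KK /KA /KB /Lam addr_ge0 // mulr_ge0 // ?addr_ge0.
Qed.

Lemma path_part (L : nat) (c : R) (N t s j' : nat) :
  (0 < c) -> (c <= 1) -> (t = 0%N \/ c < 1) -> (L <= N)%N -> (t + s < L)%N ->
  c * N%:R <= j'%:R < c * N%:R + 1 -> (j' <= N)%N ->
  `| ll (N + t + s) (j' + s) - ll N j' | <= L%:R * (KA c + KB c).
Proof.
move=> c0 c1 ht NL tsL /andP [jl ju] jN.
have N1 : (1 : R) <= N%:R by rewrite ler1n (leq_trans _ NL) // (leq_trans _ tsL).
have hM : 0 < M by apply: lt_le_trans (X_gt0 0) (hXM 0).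
have hB : `| ll (N + t) j' - ll N j' | <= t%:R * KB c.
  have := @path_bnd R (fun u => ll (N + u) j') (KB c) t.
  rewrite addn0; apply => u hu.
  have cl1 : c < 1 by case: ht => // t0; move: hu; rewrite t0.
  have hjN : (j' <= N + u)%N by rewrite (leq_trans jN) // leq_addr.
  have /andP[s1 s2] := stepB (N + u) j' hjN.
  rewrite addnS; set D := ll _ _ - _ in s1 s2 *.
  have lo : ln ((1 - c) / 2) <= ln (((N + u).+1%:R - j'%:R) / (N + u).+1%:R).
    have hN : (0 : R) < (N + u).+1%:R by rewrite ltr0n.
    have p1 : 0 < (1 - c) / 2 by rewrite divr_gt0 // subr_gt0.
    have p2 : 0 < ((N + u).+1%:R - j'%:R) / (N + u).+1%:R :> R.
      by rewrite divr_gt0 // subr_gt0 ltr_nat ltnS.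
    rewrite ler_ln ?posrE //.
    rewrite ler_pdivrMr // -natr1 natrD.
    have u0 : (0 : R) <= u%:R by [].
    have h1 : 0 <= (1 - c) * (N%:R - 1) by rewrite mulr_ge0 // subr_ge0 // ltW.
    have h2 : 0 <= c * u%:R by rewrite mulr_ge0 // ltW.
    rewrite mulrAC ler_pdivlMr; last by rewrite -natrD natr1 ltr0n.
    nra.
  have := absb _ (ln ((1 - c) / 2)); have := absb _ (ln ((m + M) / m)).
  rewrite ler_norml /KB; lra.
have hA : `| ll (N + t + s) (j' + s) - ll (N + t) j' | <= s%:R * KA c.
  have := @path_bnd R (fun u => ll (N + t + u) (j' + u)) (KA c) s.
  rewrite !addn0; apply => u hu.
  have hjN : (j' + u <= N + t + u)%N by rewrite leq_add2r (leq_trans jN) // leq_addr.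
  have /andP[s1 s2] := stepA (N + t + u) (j' + u) hjN.
  rewrite !addnS; set D := ll _ _ - _ in s1 s2 *.
  have lo : ln (m * c / 2) <= ln (m * (j' + u).+1%:R / (N + t + u).+1%:R).
    have hN : (0 : R) < (N + t + u).+1%:R by rewrite ltr0n.
    rewrite ler_ln ?posrE ?divr_gt0 ?mulr_gt0 ?ltr0n //.
    rewrite ler_pdivlMr //.
    have hb : ((N + t + u).+1%:R : R) <= 2 * N%:R.
      have h : ((N + t + u).+1%:R : R) <= (N + N)%:R by rewrite ler_nat -addnA -addnS leq_add2l (leq_trans _ NL) // (leq_trans _ tsL) // ltnS leq_add2l ltnW.
      by rewrite natrD in h; lra.
    have e1 : ((N + t + u).+1%:R : R) = N%:R + t%:R + u%:R + 1 by rewrite -!natrD natr1.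
    have e2 : ((j' + u).+1%:R : R) = j'%:R + u%:R + 1 by rewrite -!natrD natr1.
    rewrite e1 e2 in hb *.
    have u0 : (0 : R) <= u%:R by [].
    have h3 := ler_wpM2l (ltW c0) hb.
    have h4 : c * (N%:R + t%:R + u%:R + 1) <= 2 * (j'%:R + u%:R + 1).
      lra.
    have := ler_wpM2l (ltW hm) h4.
    lra.
  have := absb _ (ln (m * c / 2)); have := absb _ (ln (2 * M)).
  rewrite ler_norml /KA; lra.
have -> : ll (N + t + s) (j' + s) - ll N j'
    = (ll (N + t + s) (j' + s) - ll (N + t) j') + (ll (N + t) j' - ll N j') by ring.
apply: (le_trans (ler_normD _ _)).
have ka : 0 <= KA c by rewrite addr_ge0.
have kb : 0 <= KB c by rewrite addr_ge0.
have sL : (s%:R : R) <= L%:R by rewrite ler_nat (leq_trans _ (ltnW tsL)) // leq_addl.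
have tL : (t%:R : R) <= L%:R by rewrite ler_nat (leq_trans _ (ltnW tsL)) // leq_addr.
have := ler_wpM2r ka sL; have := ler_wpM2r kb tL.
lra.
Qed.

Lemma main_bound (L : nat) (c : R) (n : nat) : (0 < L)%N -> 0 < c -> c <= 1 -> (L <= n)%N ->
 `| ll n (ceiln (c * n%:R)) / (ceiln (c * n%:R))%:R
    - ll (n %/ L * L) (ceiln (c * (n %/ L * L)%:R)) / (ceiln (c * (n %/ L * L)%:R))%:R |
 <= KK L c / (c * n%:R).
Proof.
move=> L0 c0 c1 nL.
set N := (n %/ L * L)%N; set r := (n %% L)%N.
have nE : n = (N + r)%N by rewrite /N /r -divn_eq.
have rL : (r < L)%N by rewrite ltn_pmod.
have k1 : (0 < n %/ L)%N by rewrite divn_gt0.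
have NL : (L <= N)%N by rewrite /N leq_pmull.
set j := ceiln (c * n%:R); set j' := ceiln (c * N%:R).
have /andP[jl ju] := @ceiln_bnd R _ (mulr_ge0 (ltW c0) (ler0n R n)).
have /andP[jl' ju'] := @ceiln_bnd R _ (mulr_ge0 (ltW c0) (ler0n R N)).
rewrite -/j in jl ju; rewrite -/j' in jl' ju'.
have nR : (n%:R : R) = N%:R + r%:R by rewrite nE natrD.
have N1 : (1 : R) <= N%:R by rewrite ler1n (leq_trans _ NL).
have r0 : (0 : R) <= r%:R by [].
have cN : c * N%:R <= N%:R by rewrite ler_piMl.
have cr : c * r%:R <= r%:R by rewrite ler_piMl.
have hjn : (j <= n)%N.
  rewrite -ltnS -(ltr_nat R) -natr1.
  have : c * n%:R <= n%:R by rewrite ler_piMl.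
  lra.
have hj'N : (j' <= N)%N.
  rewrite -ltnS -(ltr_nat R) -natr1; lra.
have hj'j : (j' <= j)%N.
  rewrite -ltnS -(ltr_nat R) -natr1.
  have : c * N%:R <= c * n%:R by rewrite ler_pM2l // ler_nat nE leq_addr.
  lra.
have hjr : (j <= j' + r)%N.
  rewrite -ltnS -(ltr_nat R) -natr1 natrD.
  rewrite nR mulrDr in ju; lra.
have j'0 : (0 < j')%N.
  rewrite -(ltr_nat R); apply: lt_le_trans jl'; rewrite mulr_gt0 //.
  by apply: lt_le_trans N1.
set s := (j - j')%N; set t := (r - s)%N.
have jE : j = (j' + s)%N by rewrite /s subnKC.
have sr : (s <= r)%N by rewrite /s leq_subLR.
have nE2 : n = (N + t + s)%N by rewrite -addnA /t subnK // nE.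
have ht : t = 0%N \/ c < 1.
  have [cl|cge] := ltP c 1; first by right.
  left; have c_1 : c = 1 by apply/le_anti; rewrite c1 cge.
  rewrite c_1 !mul1r in jl ju jl' ju'.
  have : j = n.
    apply/eqP; rewrite eqn_leq hjn /=; rewrite -(ler_nat R) //.
  have : j' = N.
    apply/eqP; rewrite eqn_leq hj'N /=; rewrite -(ler_nat R) //.
  by move=> ej' ej; rewrite /t /s ej ej' nE addKn subnn.
have tsL : (t + s < L)%N by rewrite /t subnK.
have P := @path_part L c N t s j' c0 c1 ht NL tsL.
rewrite jl' ju' in P; have {}P := P isT hj'N.
rewrite -jE -nE2 in P.
set A := ll n j in P *; set B := ll N j' in P *.
have J0 : (0 : R) < j%:R by rewrite ltr0n (leq_trans j'0).
have J'0 : (0 : R) < j'%:R by rewrite ltr0n.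
set beta := B / j'%:R.
have hbeta : `|beta| <= Lam.
  have /andP[b1 b2] := ll_bnd N j' hj'N; rewrite -/B in b1 b2.
  have l1 : ln m <= beta by rewrite /beta ler_pdivlMr // mulrC.
  have l2 : beta <= ln M by rewrite /beta ler_pdivrMr // mulrC.
  have := absb _ (ln m); have := absb _ (ln M).
  rewrite ler_norml /Lam; lra.
have eq : A / j%:R - beta = ((A - B) - beta * (j%:R - j'%:R)) / j%:R.
  rewrite /beta; field; rewrite ?gt_eqF //.
rewrite eq normf_div (gtr0_norm J0).
have hsL : (j%:R : R) - j'%:R <= L%:R.
  by rewrite jE natrD addrAC subrr add0r ler_nat (leq_trans sr (ltnW rL)).
have hs0 : (0 : R) <= j%:R - j'%:R by rewrite subr_ge0 ler_nat.
have hnum : `|(A - B) - beta * (j%:R - j'%:R)| <= KK L c.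
  apply: (le_trans (ler_normB _ _)).
  rewrite normrM (ger0_norm hs0) /KK; apply: lerD => //.
  have := ler_wpM2l (normr_ge0 beta) hsL.
  have := ler_wpM2r (ler0n R L) hbeta.
  lra.
have hcn : 0 < c * n%:R by rewrite mulr_gt0 // ltr0n (leq_trans L0).
apply: (@le_trans _ _ (KK L c / j%:R)).
  by apply: ler_wpM2r => //; rewrite invr_ge0 ltW.
apply: ler_wpM2l; first exact: KK_ge0.
by rewrite lef_pV2 ?posrE.
Qed.
End Comb.

Import numFieldNormedType.Exports.
Local Open Scope classical_set_scope.

Lemma ceiln_le (R : realType) (c : R) (n : nat) : 0 <= c -> c <= 1 -> (ceiln (c * n%:R) <= n)%N.
Proof.
move=> c0 c1; have /andP[_ h] := @ceiln_bnd R _ (mulr_ge0 c0 (ler0n R n)).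
rewrite -ltnS -(ltr_nat R) -natr1.
have : c * n%:R <= n%:R by rewrite ler_piMl.
lra.
Qed.

Lemma per_bounds (R : realType) (L : nat) (X : nat -> R) : (0 < L)%N ->
  (forall i, 0 < X i) -> (forall i, X (i + L)%N = X i) ->
  exists m M : R, [/\ 0 < m, forall i, m <= X i & forall i, X i <= M].
Proof.
move=> L0 Xp Xper.
have H : forall q r, X (r + q * L)%N = X r.
  move=> q; elim: q => [|q IH] r.
    by rewrite mul0n addn0.
  by rewrite mulSn addnCA addnC Xper IH.
have Xmod : forall i, X i = X (i %% L)%N.
  by move=> i; rewrite {1}(div.divn_eq i L) addnC H.
have s0 : forall i, (X (i %% L)%N)^-1 <= \sum_(k < L) (X k)^-1.
  move=> i; rewrite (bigD1 (Ordinal (ltn_pmod i L0))) //= lerDl.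
  by apply: sumr_ge0 => k _; rewrite invr_ge0 ltW.
have spos : 0 < \sum_(k < L) (X k)^-1.
  by apply: lt_le_trans (s0 0%N); rewrite invr_gt0.
exists (\sum_(k < L) (X k)^-1)^-1, (\sum_(k < L) X k); split.
- by rewrite invr_gt0.
- move=> i; rewrite Xmod -[X (i %% L)%N]invrK lef_pV2 ?posrE ?invr_gt0 //.
- move=> i; rewrite Xmod (bigD1 (Ordinal (ltn_pmod i L0))) //= lerDl.
  by apply: sumr_ge0 => k _; rewrite ltW.
Qed.

Theorem lemma4p4 (R : realType) (L : nat) (X : nat -> R) (F : R -> R) :
  (0 < L)%N ->
  (forall i, 0 < X i) ->
  (forall i, X (i + L)%N = X i) ->
  (forall c, 0 <= c <= 1 -> (fun k => FX X L k c) @ \oo --> F c) ->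
  {within `[0, 1], continuous F} ->
  forall c, 0 < c <= 1 ->
    (fun n => powR (S X n (ceiln (c * n%:R))) ((ceiln (c * n%:R))%:R)^-1)
      @ \oo --> F c.
Proof.
move=> L0 Xp Xper HF _ c /andP[c0 c1].
have [m [M [hm hXm hXM]]] := @per_bounds R L X L0 Xp Xper.
have SE : forall n k, S X n k = ss R X n k.
  by move=> n k; rewrite /S /ss sum_ee mulrC.
set d := fun n => ll R X n (ceiln (c * n%:R)) / (ceiln (c * n%:R))%:R
    - ll R X (n %/ L * L) (ceiln (c * (n %/ L * L)%:R)) / (ceiln (c * (n %/ L * L)%:R))%:R.
have Heq : (fun n => powR (S X n (ceiln (c * n%:R))) ((ceiln (c * n%:R))%:R)^-1)
    = (fun n => expR (d n)) \* (fun n => FX X L (n %/ L) c).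
  apply: funext => n /=.
  rewrite /FX (gt_eqF c0) /= !SE /powR.
  have p1 : 0 < ss R X n (ceiln (c * n%:R)).
    by apply: (ss_gt0 R X m M hm hXm hXM); apply: ceiln_le => //; exact: ltW.
  have p2 : 0 < ss R X (n %/ L * L) (ceiln (c * (n %/ L * L)%:R)).
    by apply: (ss_gt0 R X m M hm hXm hXM); apply: ceiln_le => //; exact: ltW.
  rewrite (gt_eqF p1) (gt_eqF p2).
  by rewrite -expRD /d /ll; congr expR; ring.
have Hd : d @ \oo --> 0.
  apply/cvgrPdist_lt => eps heps.
  have cpos : 0 < c * eps by rewrite mulr_gt0.
  near=> n.
  rewrite sub0r normrN.
  have hnL : (L <= n)%N by near: n; apply: nbhs_infty_ge.
  have hn : KK R m M L c / (c * eps) + 1 <= n%:R by near: n; apply: nbhs_infty_ger.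
  apply: (le_lt_trans (main_bound R X m M hm hXm hXM L c n L0 c0 c1 hnL)).
  have hcn : 0 < c * n%:R by rewrite mulr_gt0 // ltr0n (leq_trans L0).
  rewrite ltr_pdivrMr //.
  have : KK R m M L c / (c * eps) < n%:R by lra.
  rewrite ltr_pdivrMr // => h; lra.
rewrite Heq.
have -> : F c = expR 0 * F c by rewrite expR0 mul1r.
apply: cvgM.
- have := continuous_cvg _ (@continuous_expR R 0) Hd.
  exact.
- have hc : 0 <= c <= 1 by rewrite ltW // c1.
  have := cvg_comp _ _ (cvg_divnr L L0) (HF c hc).
  exact.
Unshelve. all: end_near.
Qed.
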